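(* (1) If $\alpha:P\to P_0$ is an incentive strategy of the leader and $u^\natural\in\mathcal{E}(\alpha)$, then $(\alpha[u^\natural],u^\natural)\in\mathcal{B}$. (2) If $u_0^\natural\in P_0$ and $u^\natural\in P$ satisfy $(u_0^\natural,u^\natural)\in\mathcal{B}$, then there exists an incentive strategy of the leader $\alpha:P\to P_0$ such that $\alpha[u^\natural]=u_0^\natural$ and $u^\natural\in\mathcal{E}(\alpha)$.
   Context: Static game with a leader (player $0$) and followers $1,\dots,n$. Each $P_i$ ($i=0,\dots,n$) is a nonempty compact metric space and each payoff $J_i:P_0\times P_1\times\dots\times P_n\to\mathbb{R}$ ($i=0,\dots,n$) is continuous; each player maximizes. Let $P=P_1\times\dots\times P_n$; elements $u=(u_1,\dots,u_n)\in P$ are profiles of followers' strategies, and for $u_i'\in P_i$, $(u_i',u_{-i})$ denotes $u$ with the $i$-th component replaced by $u_i'$. Write $J_i(u_0,u)=J_i(u_0,u_1,\dots,u_n)$. An incentive strategy of the leader is an arbitrary map $\alpha:P\to P_0$. The set of followers' Nash equilibria against $\alpha$ is $\mathcal{E}(\alpha)=\{u\in P: J_i(\alpha[u],u)\ge J_i(\alpha[(u_i',u_{-i})],(u_i',u_{-i}))\ \text{for all } i=1,\dots,n,\ u_i'\in P_i\}$. Define $\mathcal{B}=\{(u_0,u)\in P_0\times P: J_i(u_0,u)\ge\max_{u_i'\in P_i}\min_{u_0'\in P_0}J_i(u_0',u_i',u_{-i})\ \text{for } i=1,\dots,n\}$. *)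

(* Defs.v *)
From mathcomp Require Import all_boot.
From Stdlib Require Import Reals ClassicalEpsilon List.
Set Implicit Arguments. Unset Strict Implicit.
Open Scope R_scope.

Definition open_set (M : Metric_Space) (U : Base M -> Prop) : Prop :=
  forall x, U x -> exists r, r > 0 /\ forall y, dist M x y < r -> U y.

Definition compact_space (M : Metric_Space) : Prop :=
  forall (I : Type) (U : I -> Base M -> Prop),
    (forall i, open_set (U i)) ->
    (forall x, exists i, U i x) ->
    exists l : list I, forall x, exists i, In i l /\ U i x.

Definition nonempty_space (M : Metric_Space) : Prop := inhabited (Base M).

Definition profile (n : nat) (X : 'I_n -> Metric_Space) : Type :=
  forall i : 'I_n, Base (X i).

(* (v, u_{-i}) : u with the i-th component replaced by v. *)
Definition upd (n : nat) (X : 'I_n -> Metric_Space) (u : profile X)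
  (i : 'I_n) (v : Base (X i)) : profile X :=
  fun j => match @eqP _ i j with
           | ReflectT e => eq_rect i (fun k => Base (X k)) v j e
           | ReflectF _ => u j
           end.

Definition cont_payoff (n : nat) (X0 : Metric_Space) (X : 'I_n -> Metric_Space)
  (J : Base X0 -> profile X -> R) : Prop :=
  forall (x0 : Base X0) (x : profile X) (eps : R), eps > 0 ->
    exists delta, delta > 0 /\
      forall (y0 : Base X0) (y : profile X),
        dist X0 x0 y0 < delta -> (forall i, dist (X i) (x i) (y i) < delta) ->
        Rabs (J y0 y - J x0 x) < eps.

(* minimum / maximum values of a real function (chosen by epsilon; they
   exist under compactness + continuity). *)
Definition is_min_val (T : Type) (f : T -> R) (m : R) : Prop :=
  (exists x, f x = m) /\ forall x, m <= f x.
Definition is_max_val (T : Type) (f : T -> R) (m : R) : Prop :=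
  (exists x, f x = m) /\ forall x, f x <= m.
Definition min_val (T : Type) (f : T -> R) : R :=
  epsilon (inhabits 0) (is_min_val f).
Definition max_val (T : Type) (f : T -> R) : R :=
  epsilon (inhabits 0) (is_max_val f).

Definition Nash_set (n : nat) (X0 : Metric_Space) (X : 'I_n -> Metric_Space)
  (J : 'I_n -> Base X0 -> profile X -> R) (alpha : profile X -> Base X0)
  (u : profile X) : Prop :=
  forall (i : 'I_n) (v : Base (X i)),
    J i (alpha u) u >= J i (alpha (@upd n X u i v)) (@upd n X u i v).

Definition maxmin_val (n : nat) (X0 : Metric_Space) (X : 'I_n -> Metric_Space)
  (J : 'I_n -> Base X0 -> profile X -> R) (i : 'I_n) (u : profile X) : R :=
  max_val (fun v : Base (X i) => min_val (fun u0' : Base X0 => J i u0' (@upd n X u i v))).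

Definition B_set (n : nat) (X0 : Metric_Space) (X : 'I_n -> Metric_Space)
  (J : 'I_n -> Base X0 -> profile X -> R) (u0 : Base X0) (u : profile X) : Prop :=
  forall i : 'I_n, J i u0 u >= maxmin_val J i u.

(* Main.v *)
Require Import Defs.
From mathcomp Require Import all_boot.
From Stdlib Require Import Reals Lra List ClassicalEpsilon Classical FunctionalExtensionality.
Open Scope R_scope.

Section Helpers.
Local Set Implicit Arguments.

Lemma dist0 (M : Metric_Space) (x : Base M) : dist M x x = 0.
Proof. apply (proj2 (dist_refl M x x)); reflexivity. Qed.

Lemma list_max (A : Type) (f : A -> R) (l : list A) (a : A) :
  In a l -> exists y, In y l /\ forall z, In z l -> f z <= f y.
Proof.
  revert a; induction l as [|b l IH]; intros a Ha; [destruct Ha|].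
  destruct l as [|c l'].
  - exists b; split; [left; auto|]. intros z [<-|[]]; lra.
  - destruct (IH c (or_introl Logic.eq_refl)) as [y [Hy Hm]].
    destruct (Rle_dec (f b) (f y)).
    + exists y; split; [right; auto|]. intros z [<-|Hz]; auto.
    + exists b; split; [left; auto|]. intros z [<-|Hz]; [lra|].
      specialize (Hm z Hz); lra.
Qed.

Lemma compact_max (M : Metric_Space) (f : Base M -> R) :
  compact_space M -> nonempty_space M ->
  (forall c : R, Defs.open_set (fun x : Base M => f x < c)) -> exists x, forall y, f y <= f x.
Proof.
  intros Hc [x0] Ho.
  apply NNPP; intro Hn.
  assert (H : forall x, exists y, f x < f y).
  { intro x. apply NNPP; intro H1. apply Hn. exists x. intro y.
    apply Rnot_lt_le; intro H2. apply H1; eauto. }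
  destruct (Hc (Base M) (fun y x => f x < f y) (fun y => Ho (f y)) H) as [l Hl].
  destruct (Hl x0) as [i0 [Hi0 _]].
  destruct (@list_max _ f l i0 Hi0) as [y [Hy Hm]].
  destruct (Hl y) as [i [Hi Hfi]]. specialize (Hm i Hi). lra.
Qed.

Lemma upd_other (n : nat) (X : 'I_n -> Metric_Space) (u : profile X) (i : 'I_n) (v : Base (X i)) (k : 'I_n) :
  i <> k -> @upd _ _ u i v k = u k.
Proof. intro H. unfold upd. destruct (@eqP _ i k); [contradiction|reflexivity]. Qed.

Lemma upd_same (n : nat) (X : 'I_n -> Metric_Space) (u : profile X) (i : 'I_n) (v : Base (X i)) :
  @upd _ _ u i v i = v.
Proof.
  unfold upd. destruct (@eqP _ i i) as [e|ne]; [|contradiction].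
  rewrite (eq_irrelevance e erefl). reflexivity.
Qed.

Lemma cont_first (n : nat) (X0 : Metric_Space) (X : 'I_n -> Metric_Space)
  (F : Base X0 -> profile X -> R) (hF : cont_payoff F) w c :
  Defs.open_set (fun x0 => - F x0 w < c).
Proof.
  intros x Hx. destruct (hF x w (c + F x w) ltac:(lra)) as [d [Hd Hd']].
  exists d; split; auto. intros y Hy.
  assert (H := Hd' y w Hy (fun k => ltac:(rewrite dist0; lra))).
  apply Rabs_def2 in H. lra.
Qed.

Lemma min_spec (n : nat) (X0 : Metric_Space) (X : 'I_n -> Metric_Space)
  (F : Base X0 -> profile X -> R) (hF : cont_payoff F)
  (hc : compact_space X0) (hn : nonempty_space X0) w :
  is_min_val (fun x => F x w) (min_val (fun x => F x w)).
Proof.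
  unfold min_val. apply epsilon_spec.
  destruct (compact_max (fun x => - F x w) hc hn (cont_first hF w)) as [x Hx].
  exists (F x w). split; [eauto|]. intro y; specialize (Hx y); lra.
Qed.

Lemma max_spec (n : nat) (X0 : Metric_Space) (X : 'I_n -> Metric_Space)
  (J : 'I_n -> Base X0 -> profile X -> R)
  (hX0c : compact_space X0) (hX0n : nonempty_space X0)
  (hXc : forall i, compact_space (X i)) (hXn : forall i, nonempty_space (X i))
  (hJ : forall i, cont_payoff (J i)) i u :
  is_max_val (fun v : Base (X i) => min_val (fun u0' : Base X0 => J i u0' (@upd _ _ u i v)))
    (maxmin_val J i u).
Proof.
  unfold maxmin_val, max_val. apply epsilon_spec.
  set g := (fun v : Base (X i) => min_val (fun u0' : Base X0 => J i u0' (@upd _ _ u i v))).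
  assert (Ho : forall c : R, Defs.open_set (fun v => g v < c)).
  { intros c v Hv.
    destruct (min_spec (hJ i) hX0c hX0n (@upd _ _ u i v)) as [[x0 Hx0] _].
    fold (g v) in Hx0.
    destruct (hJ i x0 (@upd _ _ u i v) (c - g v) ltac:(lra)) as [d [Hd Hd']].
    exists d; split; auto. intros w Hw.
    assert (H : Rabs (J i x0 (@upd _ _ u i w) - J i x0 (@upd _ _ u i v)) < c - g v).
    { apply Hd'. rewrite dist0; lra.
      intro k. destruct (@eqP _ i k) as [e|ne].
      - subst k. rewrite !upd_same. exact Hw.
      - rewrite !upd_other //. rewrite dist0; lra. }
    apply Rabs_def2 in H.
    destruct (min_spec (hJ i) hX0c hX0n (@upd _ _ u i w)) as [_ Hm].
    specialize (Hm x0). fold (g w) in Hm. simpl in Hm. lra. }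
  destruct (compact_max g (hXc i) (hXn i) Ho) as [v Hv].
  exists (g v). split; eauto.
Qed.

End Helpers.

Theorem lemma3 (n : nat) (X0 : Metric_Space) (X : 'I_n -> Metric_Space)
  (J0 : Base X0 -> profile X -> R) (J : 'I_n -> Base X0 -> profile X -> R)
  (hX0c : compact_space X0) (hX0n : nonempty_space X0)
  (hXc : forall i, compact_space (X i)) (hXn : forall i, nonempty_space (X i))
  (hJ0 : cont_payoff J0) (hJ : forall i, cont_payoff (J i)) :
  (forall (alpha : profile X -> Base X0) (u : profile X),
      Nash_set J alpha u -> B_set J (alpha u) u) /\
  (forall (u0 : Base X0) (u : profile X),
      B_set J u0 u ->
      exists alpha : profile X -> Base X0, alpha u = u0 /\ Nash_set J alpha u).
Proof.
  split.
  - intros alpha u HN i.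
    destruct (max_spec J hX0c hX0n hXc hXn hJ i u) as [[v Hv] _].
    destruct (min_spec (hJ i) hX0c hX0n (@upd _ _ u i v)) as [_ Hm].
    specialize (HN i v). specialize (Hm (alpha (@upd _ _ u i v))). simpl in Hm. lra.
  - intros u0 u HB.
    pose P := fun (w : profile X) (x : Base X0) => (w = u /\ x = u0) \/
      (exists j, w <> u /\ (forall k, k <> j -> w k = u k) /\ forall y, J j x w <= J j y w).
    exists (fun w => epsilon hX0n (P w)). split.
    + assert (H : P u (epsilon hX0n (P u))).
      { apply epsilon_spec. exists u0. left; auto. }
      destruct H as [[_ H]|[j [H _]]]; [exact H|contradiction].
    + intros i v. set w := @upd _ _ u i v.
      destruct (classic (w = u)) as [Heq|Hne].
      { rewrite Heq. lra. }
      assert (Hoth : forall k, k <> i -> w k = u k).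
      { intros k Hk. apply upd_other. auto. }
      assert (H : P w (epsilon hX0n (P w))).
      { apply epsilon_spec.
        destruct (compact_max (fun x => - J i x w) hX0c hX0n (cont_first (hJ i) w)) as [x Hx].
        exists x. right. exists i. split; [auto|split; auto].
        intro y; specialize (Hx y); lra. }
      destruct H as [[H _]|[j [_ [Hj Hmin]]]]; [contradiction|].
      assert (ji : j = i).
      { apply NNPP; intro nji. apply Hne. apply functional_extensionality_dep.
        intro k. destruct (classic (k = j)) as [->|kj]; auto. }
      subst j.
      assert (Ha : epsilon hX0n (P u) = u0).
      { assert (H : P u (epsilon hX0n (P u))).
        { apply epsilon_spec. exists u0. left; auto. }
        destruct H as [[_ H]|[j [H _]]]; [exact H|contradiction]. }
      rewrite Ha.
      destruct (min_spec (hJ i) hX0c hX0n w) as [[y Hy] _].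
      destruct (max_spec J hX0c hX0n hXc hXn hJ i u) as [_ HM].
      specialize (HM v). simpl in HM. specialize (Hmin y). specialize (HB i).
      fold w in HM. simpl in Hy. lra.
Qed.
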